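(* Let $U=\begin{bmatrix} a & b\\ c & d\end{bmatrix}$ be any $2\times 2$ unitary matrix. Then every uniform measure on $\mathbb{Z}$ is a stationary measure of the two-state quantum walk defined by $U$, i.e. $\mathcal{M}_{unif}\subseteq \mathcal{M}_s(U)$.
   Context: Two-state discrete-time quantum walk on $\mathbb{Z}$: a state is $\Psi=(\Psi(x))_{x\in\mathbb{Z}}\in(\mathbb{C}^2)^{\mathbb{Z}}$ with $\Psi(x)={}^T[\Psi^L(x),\Psi^R(x)]$ (no summability is required). Write $P=\begin{bmatrix} a & b\\ 0&0\end{bmatrix}$, $Q=\begin{bmatrix} 0&0\\ c&d\end{bmatrix}$, so $U=P+Q$. The evolution operator $U^{(s)}$ on $(\mathbb{C}^2)^{\mathbb{Z}}$ is $(U^{(s)}\Psi)(x)=P\Psi(x+1)+Q\Psi(x-1)$, i.e. $(U^{(s)}\Psi)^L(x)=a\Psi^L(x+1)+b\Psi^R(x+1)$, $(U^{(s)}\Psi)^R(x)=c\Psi^L(x-1)+d\Psi^R(x-1)$. Define $\phi:(\mathbb{C}^2)^{\mathbb{Z}}\to[0,\infty)^{\mathbb{Z}}$ by $\phi(\Psi)(x)=|\Psi^L(x)|^2+|\Psi^R(x)|^2$. The set of stationary measures is $\mathcal{M}_s(U)=\{\mu\in[0,\infty)^{\mathbb{Z}}\setminus\{0\}:\ \exists \Psi_0\in(\mathbb{C}^2)^{\mathbb{Z}}$ with $\phi((U^{(s)})^n\Psi_0)=\mu$ for all $n\ge 0\}$. For $c>0$ the uniform measure $\mu_u^{(c)}$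 is $\mu_u^{(c)}(x)=c$ for all $x\in\mathbb{Z}$, and $\mathcal{M}_{unif}=\{\mu_u^{(c)}:c>0\}$. *)

(* Defs.v *)
(* Complex scalars: an arbitrary numClosedFieldType C
   (e.g. the complex numbers); measures take values in the nonnegative
   reals of C. *)
From HB Require Import structures.
From mathcomp Require Import all_boot all_order all_algebra.
Set Implicit Arguments. Unset Strict Implicit. Unset Printing Implicit Defensive.
Import Order.TTheory GRing.Theory Num.Theory.
Local Open Scope ring_scope.

Definition unitary (C : numClosedFieldType) (U : 'M[C]_2) : Prop :=
  U *m (map_mx Num.conj U)^T = 1%:M.

(* states: Psi x = (Psi^L(x), Psi^R(x)), no summability *)
Definition qstate (C : numClosedFieldType) := int -> C * C.

(* (U^(s) Psi)(x) = P Psi(x+1) + Q Psi(x-1), with a = U 0 0, b = U 0 1,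
   c = U 1 0, d = U 1 1 *)
Definition Us (C : numClosedFieldType) (U : 'M[C]_2) (Psi : qstate C)
  : qstate C :=
  fun x =>
    (U 0 0 * (Psi (x + 1)).1 + U 0 1 * (Psi (x + 1)).2,
     U 1 0 * (Psi (x - 1)).1 + U 1 1 * (Psi (x - 1)).2).

Definition phi (C : numClosedFieldType) (Psi : qstate C) : int -> C :=
  fun x => `|(Psi x).1| ^+ 2 + `|(Psi x).2| ^+ 2.

Definition stationary_measure (C : numClosedFieldType) (U : 'M[C]_2)
  (mu : int -> C) : Prop :=
  (forall x, 0 <= mu x) /\ (exists x, mu x != 0) /\
  exists Psi0 : qstate C, forall n : nat, phi (iter n (Us U) Psi0) = mu.

Definition unif_measure (C : numClosedFieldType) (c : C) : int -> C :=
  fun _ => c.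

Definition is_uniform (C : numClosedFieldType) (mu : int -> C) : Prop :=
  exists c : C, 0 < c /\ mu = unif_measure c.

(* Main.v *)
Require Import Defs.
From HB Require Import structures.
From mathcomp Require Import all_boot all_order all_algebra.
From mathcomp Require Import ring.
Import Order.TTheory GRing.Theory Num.Theory.
Local Open Scope ring_scope.

Definition stepv (C : numClosedFieldType) (U : 'M[C]_2) (w : C * C) : C * C :=
  (U 0 0 * w.1 + U 0 1 * w.2, U 1 0 * w.1 + U 1 1 * w.2).

Lemma iter_const (C : numClosedFieldType) (U : 'M[C]_2) (w : C * C) n :
  iter n (@Us C U) (fun _ => w) = (fun _ => iter n (@stepv C U) w).
Proof. by elim: n => //= n ->. Qed.

Lemma norm_step (C : numClosedFieldType) (U : 'M[C]_2) (w : C * C) :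
  unitary U ->
  `|(@stepv C U w).1| ^+ 2 + `|(@stepv C U w).2| ^+ 2 = `|w.1| ^+ 2 + `|w.2| ^+ 2.
Proof.
rewrite /unitary => H.
have H' := mulmx1C H.
have e := fun i j => congr1 (fun M : 'M[C]_2 => M i j) H'.
have e00 := e 0 0; have e01 := e 0 1; have e10 := e 1 0; have e11 := e 1 1.
have E0 : widen_ord (leqnSn 1) ord_max = 0 :> 'I_2 by apply/val_inj.
have E1 : (ord_max : 'I_2) = 1 by apply/val_inj.
move: e00 e01 e10 e11; rewrite !mxE !big_ord_recr !big_ord0 /= !mxE /= !E0 !E1 !add0r.
move=> e00 e01 e10 e11.
case: w => w1 w2; rewrite /stepv /= !normCK !rmorphD !rmorphM /=.
have -> : (U 0 0 * w1 + U 0 1 * w2) * ((U 0 0)^* * w1^* + (U 0 1)^* * w2^*) +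
  (U 1 0 * w1 + U 1 1 * w2) * ((U 1 0)^* * w1^* + (U 1 1)^* * w2^*) =
  w1 * w1^* * ((U 0 0)^* * U 0 0 + (U 1 0)^* * U 1 0)
  + w2 * w2^* * ((U 0 1)^* * U 0 1 + (U 1 1)^* * U 1 1)
  + w1^* * w2 * ((U 0 0)^* * U 0 1 + (U 1 0)^* * U 1 1)
  + w1 * w2^* * ((U 0 1)^* * U 0 0 + (U 1 1)^* * U 1 0) by ring.
rewrite e00 e01 e10 e11 /=.
by ring.
Qed.

Theorem theorem1 (C : numClosedFieldType) (U : 'M[C]_2) :
  unitary U ->
  forall mu : int -> C, is_uniform mu -> stationary_measure U mu.
Proof.
move=> HU mu [c [c0 ->]].
split; first by move=> x; rewrite /unif_measure ltW.
split; first by exists 0; rewrite /unif_measure gt_eqF.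
exists (fun _ => (sqrtC c, 0)) => n.
rewrite iter_const /phi /unif_measure /=.
have -> : `|(iter n (@stepv C U) (sqrtC c, 0)).1| ^+ 2 +
          `|(iter n (@stepv C U) (sqrtC c, 0)).2| ^+ 2 = c.
  elim: n => [|n IH] /=; last by rewrite norm_step.
  by rewrite normr0 expr0n /= addr0 -normrX sqrtCK ger0_norm // ltW.
by [].
Qed.
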